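(* Assume (A1) and (A2) below. Then for any policy $\pi$ and any $s\in\mathcal S$, $u_t(s)=w_t(s)-g_t(s)$, where $$u_t(s)=\mathbb{V}_{a,s'\sim\pi,\bar p_t}\big[\bar V_t^\pi(s')\big]-\mathbb{E}_{p\sim\Phi_t}\Big[\mathbb{V}_{a,s'\sim\pi,p}\big[V^{\pi,p}(s')\big]\Big],$$ $$w_t(s)=\mathbb{V}_{p\sim\Phi_t}\Big[\sum_{a,s'}\pi(a\mid s)p(s'\mid s,a)\bar V^\pi_t(s')\Big],$$ $$g_t(s)=\mathbb{E}_{p\sim\Phi_t}\Big[\mathbb{V}_{a,s'\sim\pi,p}\big[V^{\pi,p}(s')\big]-\mathbb{V}_{a,s'\sim\pi,p}\big[\bar V^\pi_t(s')\big]\Big].$$ Furthermore, $g_t(s)\ge 0$, and hence $u_t(s)\le w_t(s)$.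
   Context: Let $\mathcal S$ be a finite state space, $\mathcal A$ a finite action space, $r:\mathcal S\times\mathcal A\to\mathbb R$ a known bounded (deterministic) reward function and $\gamma\in[0,1)$ a discount factor. A transition function $p$ assigns to each $(s,a)$ a probability distribution $p(\cdot\mid s,a)$ on $\mathcal S$. A policy $\pi$ gives distributions $\pi(\cdot\mid s)$ on $\mathcal A$. For a transition function $p$, the value function is $V^{\pi,p}(s)=\mathbb E\big[\sum_{h\ge 0}\gamma^h r(s_h,a_h)\mid s_0=s\big]$ with $a_h\sim\pi(\cdot\mid s_h)$, $s_{h+1}\sim p(\cdot\mid s_h,a_h)$. The transition function $p$ is a random variable with (posterior) distribution $\Phi_t$. Define $\bar p_t(s'\mid s,a)=\mathbb E_{p\sim\Phi_t}[p(s'\mid s,a)]$ and $\bar V^\pi_t(s)=\mathbb E_{p\sim\Phi_t}[V^{\pi,p}(s)]$. For a transition function $q$ and a function $f$ on $\mathcal S$, $\mathbb V_{a,s'\sim\pi,q}[f(s')]$ denotes the variance of $f(s')$ when $a\sim\pi(\cdot\mid s)$ and $s'\sim q(\cdot\mid s,a)$. Assumptions: (A1) (independent transitions) $p(s'\mid x,a)$ and $p(s'\mid y,a)$ are independent random variables if $x\neq y$; (A2) (acyclic MDP) the MDP is a directed acyclic graph, i.e., states are not visited more than once in any given episode. *)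

(* Defs.v *)
From HB Require Import structures.
From mathcomp Require Import all_boot all_order all_algebra.
From mathcomp Require Import all_classical all_reals all_analysis.
Set Implicit Arguments. Unset Strict Implicit. Unset Printing Implicit Defensive.
Import Order.TTheory GRing.Theory Num.Theory.
Local Open Scope ring_scope.
Local Open Scope classical_set_scope.

Section MDP.
Variables (R : realType) (S A : finType).

Definition is_transition (q : S -> A -> S -> R) : Prop :=
  forall s a, (forall s', 0 <= q s a s') /\ \sum_(s' : S) q s a s' = 1.

Definition is_policy (pi : S -> A -> R) : Prop :=
  forall s, (forall a, 0 <= pi s a) /\ \sum_(a : A) pi s a = 1.

(* Distribution of s_h given s_0 = s, for the chain a_h ~ pi(.|s_h),
   s_{h+1} ~ q(.|s_h,a_h):  state_dist pi q h s x = P(s_h = x | s_0 = s). *)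
Fixpoint state_dist (pi : S -> A -> R) (q : S -> A -> S -> R) (h : nat)
    (s : S) (x : S) : R :=
  match h with
  | 0 => (x == s)%:R
  | h'.+1 => \sum_(y : S) state_dist pi q h' s y *
               \sum_(a : A) pi y a * q y a x
  end.

(* V^{pi,q}(s) = E[ sum_{h>=0} gamma^h r(s_h,a_h) | s_0 = s ]
   = sum_{h>=0} gamma^h E[r(s_h,a_h)]  (limit of partial sums). *)
Definition value (r : S -> A -> R) (gamma : R) (pi : S -> A -> R)
    (q : S -> A -> S -> R) (s : S) : R :=
  limn (fun n => \sum_(0 <= h < n)
    gamma ^+ h * \sum_(x : S) state_dist pi q h s x *
                   \sum_(a : A) pi x a * r x a).

Definition next_mean (pi : S -> A -> R) (q : S -> A -> S -> R) (s : S)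
    (f : S -> R) : R :=
  \sum_(a : A) \sum_(s' : S) pi s a * q s a s' * f s'.

Definition next_var (pi : S -> A -> R) (q : S -> A -> S -> R) (s : S)
    (f : S -> R) : R :=
  \sum_(a : A) \sum_(s' : S)
     pi s a * q s a s' * (f s' - next_mean pi q s f) ^+ 2.

End MDP.

Section Random.
Context {d : measure_display} {Omega : measurableType d} {R : realType}
        {S A : finType}.

(* (A1) independent transitions: the random transition rows
   p(.|x,.) , x in S, are mutually independent, i.e. the product rule
   holds for every family of "rectangle" events
   {w | forall a s', p w x a s' \in B x a s'} (taking B x := setT drops x). *)
Definition independent_transitions (P : probability Omega R)
    (p : Omega -> S -> A -> S -> R) : Prop :=
  forall B : S -> A -> S -> set R,
    (forall x a s', measurable (B x a s')) ->
    P (\bigcap_(x in [set: S]) [set w | forall a s', B x a s' (p w x a s')])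
    = (\prod_(x : S) P [set w | forall a s', B x a s' (p w x a s')])%E.

(* (A2) acyclic MDP: there is a topological order rho of the states such that
   every possible transition goes strictly up in rho, except at terminal
   states, which are absorbing (the episode has ended). *)
Definition acyclic_mdp (p : Omega -> S -> A -> S -> R) : Prop :=
  exists (term : pred S) (rho : S -> nat),
    forall w s a s',
      (term s -> p w s a s = 1) /\
      (~~ term s -> p w s a s' != 0 -> (rho s < rho s')%N).

End Random.

Definition mean_transition {d : measure_display} {Omega : measurableType d}
    {R : realType} {S A : finType} (P : probability Omega R)
    (p : Omega -> S -> A -> S -> R) : S -> A -> S -> R :=
  fun s a s' => fine ('E_P[fun w => p w s a s'])%E.

Definition mean_value {d : measure_display} {Omega : measurableType d}
    {R : realType} {S A : finType} (P : probability Omega R)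
    (p : Omega -> S -> A -> S -> R) (r : S -> A -> R) (gamma : R)
    (pi : S -> A -> R) : S -> R :=
  fun s => fine ('E_P[fun w => value r gamma pi (p w) s])%E.

(* Main.v *)
Require Import Defs.
From HB Require Import structures.
From mathcomp Require Import all_boot all_order all_algebra.
From mathcomp Require Import all_classical all_reals all_analysis.
From mathcomp Require Import measurable_realfun.
From mathcomp Require Import ring lra.
Import Order.TTheory GRing.Theory Num.Theory.
Local Open Scope ring_scope.

Module Helpers.
Set Implicit Arguments. Unset Strict Implicit. Unset Printing Implicit Defensive.
Import numFieldNormedType.Exports.
Local Open Scope ring_scope.
Local Open Scope classical_set_scope.

Section Gen.
Context d (T : measurableType d) (R : realType) (P : probability T R).

Definition bmf (f : T -> R) := measurable_fun setT f /\ exists M, forall x, `|f x| <= M.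

Lemma bmf_Lfun f : bmf f -> f \in Lfun P 1.
Proof.
move=> [mf [M hM]]; apply/Lfun1_integrable.
apply: measurable_bounded_integrable => //.
  by rewrite (le_lt_trans (probability_le1 P measurableT)) // ltry.
exists M; split; first exact: num_real.
by move=> y My x _; apply: le_trans (hM x) (ltW My).
Qed.

Definition RE (f : T -> R) : R := fine ('E_P[f])%E.

Lemma EE f : bmf f -> ('E_P[f] = (RE f)%:E)%E.
Proof. by move=> /bmf_Lfun h; rewrite /RE fineK // expectation_fin_num. Qed.

Lemma bmf_cst c : bmf (fun _ => c).
Proof. by split; [exact: measurable_cst | exists `|c|]. Qed.

Lemma bmfD f g : bmf f -> bmf g -> bmf (fun x => f x + g x).
Proof.
move=> [mf [M hM]] [mg [N hN]]; split; first exact: measurable_funD.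
by exists (M + N) => x; apply: le_trans (ler_normD _ _) (lerD (hM x) (hN x)).
Qed.

Lemma bmfM f g : bmf f -> bmf g -> bmf (fun x => f x * g x).
Proof.
move=> [mf [M hM]] [mg [N hN]]; split; first exact: measurable_funM.
exists (M * N) => x; rewrite normrM; apply: ler_pM => //.
Qed.

Lemma bmfN f : bmf f -> bmf (fun x => - f x).
Proof.
move=> [mf [M hM]]; split; first exact: measurableT_comp.
by exists M => x; rewrite normrN.
Qed.

Lemma bmfB f g : bmf f -> bmf g -> bmf (fun x => f x - g x).
Proof. by move=> hf hg; apply: bmfD => //; apply: bmfN. Qed.

Lemma bmf_sum (I : finType) (F : I -> T -> R) :
  (forall i, bmf (F i)) -> bmf (fun x => \sum_(i : I) F i x).
Proof.
move=> hF; rewrite /index_enum; elim: (Finite.enum I) => [|i s IH].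
  by under [X in bmf X]funext => x do rewrite big_nil; apply: bmf_cst.
by under [X in bmf X]funext => x do rewrite big_cons; apply: bmfD.
Qed.

Lemma RE_cst c : RE (fun _ => c) = c.
Proof. by rewrite /RE expectation_cst. Qed.

Lemma RED f g : bmf f -> bmf g -> RE (fun x => f x + g x) = RE f + RE g.
Proof.
move=> hf hg; rewrite /RE.
rewrite (_ : (fun x => f x + g x) = (f \+ g)) // expectationD ?bmf_Lfun //.
by rewrite fineD // expectation_fin_num // bmf_Lfun.
Qed.

Lemma REZ k f : bmf f -> RE (fun x => k * f x) = k * RE f.
Proof.
move=> hf; rewrite {1}/RE (_ : (fun x => k * f x) = (k \o* f)); last first.
  by apply: funext => x /=; rewrite mulrC.
by rewrite expectationZl ?bmf_Lfun // EE.
Qed.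

Lemma REN f : bmf f -> RE (fun x => - f x) = - RE f.
Proof.
move=> hf; rewrite (_ : (fun x => - f x) = (fun x => -1 * f x)).
  by rewrite REZ // mulN1r.
by apply: funext => x; rewrite mulN1r.
Qed.

Lemma REB f g : bmf f -> bmf g -> RE (fun x => f x - g x) = RE f - RE g.
Proof. by move=> hf hg; rewrite RED ?REN //; apply: bmfN. Qed.

Lemma RE_sum (I : finType) (F : I -> T -> R) :
  (forall i, bmf (F i)) -> RE (fun x => \sum_(i : I) F i x) = \sum_(i : I) RE (F i).
Proof.
move=> hF; rewrite /index_enum; elim: (Finite.enum I) => [|i s IH].
  by under [X in RE X]funext => x do rewrite big_nil; rewrite big_nil RE_cst.
under [X in RE X]funext => x do rewrite big_cons.
rewrite big_cons RED ?IH //.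
by rewrite /index_enum; elim: s {IH} => [|j s IH];
  [under [X in bmf X]funext => x do rewrite big_nil; apply: bmf_cst
  |under [X in bmf X]funext => x do rewrite big_cons; apply: bmfD].
Qed.

Lemma RE_ge0 f : (forall x, 0 <= f x) -> 0 <= RE f.
Proof. by move=> h; rewrite /RE fine_ge0 // expectation_ge0. Qed.

Lemma RE_le f g : bmf f -> bmf g -> (forall x, f x <= g x) -> RE f <= RE g.
Proof.
move=> hf hg h; rewrite -subr_ge0 -REB //; apply: RE_ge0 => x.
by rewrite subr_ge0.
Qed.

Lemma RE_indic (A : set T) : measurable A -> RE (\1_A) = fine (P A).
Proof. by move=> mA; rewrite /RE expectation_indic. Qed.

Lemma bmf_indic (A : set T) : measurable A -> bmf (\1_A).
Proof.
move=> mA; split; first exact: measurable_indic.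
by exists 1 => x; rewrite /indic; case: (x \in A); rewrite ?normr1 ?normr0.
Qed.

End Gen.

Section Indep.
Context d (T : measurableType d) (R : realType) (P : probability T R).

Definition pr (X : set T) : R := fine (P X).

Lemma prE {X} : measurable X -> P X = (pr X)%:E.
Proof. by move=> mX; rewrite /pr fineK // fin_num_measure. Qed.

Lemma prT : pr setT = 1.
Proof. by rewrite /pr probability_setT. Qed.

Lemma PDI {A B} : measurable A -> measurable B ->
  P A = (P (A `\` B) + P (A `&` B))%E.
Proof. exact: measureDI. Qed.

Lemma lam {E : set T} : measurable E ->
  lambda_system setT [set F | measurable F /\ P (E `&` F) = (P E * P F)%E].
Proof.
move=> mE; split.
- by [].
- split; first exact: measurableT.
  by rewrite setIT (prE measurableT) prT mule1.
- move=> A B BA [mA hA] [mB hB]; split; first exact: measurableD.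
  have h1 := PDI (measurableI _ _ mE mA) mB.
  have h2 := PDI mA mB.
  rewrite -setIA (setIidr BA) in h1.
  rewrite (setIidr BA) in h2.
  rewrite setIDA.
  move: h1 h2 hA hB.
  have mEA := measurableI _ _ mE mA; have mEB := measurableI _ _ mE mB.
  have mAB := measurableD mA mB; have mEAB := measurableD mEA mB.
  rewrite (prE mEA) (prE mEB) (prE mA) (prE mB) (prE mAB) (prE mEAB) (prE mE).
  rewrite -!EFinD -!EFinM => -[h1] [h2] [hA] [hB].
  congr (_%:E).
  have -> : pr (E `&` A `\` B) = pr (E `&` A) - pr (E `&` B) by lra.
  by rewrite hA hB h2; ring.
- move=> F ndF hF; split.
    by apply: bigcup_measurable => k _; case: (hF k).
  have mF k : measurable (F k) by case: (hF k).
  have h1 := nondecreasing_cvg_mu (mu:=P) mF (bigcup_measurable (fun k _ => mF k)) ndF.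
  have mEF k : measurable (E `&` F k) by apply: measurableI.
  have ndEF : nondecreasing_seq (fun k => E `&` F k).
    move=> m n mn /=; apply/subsetPset; apply: setIS; apply/subsetPset; exact: ndF.
  have h2 := nondecreasing_cvg_mu (mu:=P) mEF (bigcup_measurable (fun k _ => mEF k)) ndEF.
  have h3 := cvgeZl (fin_num_measure P _ mE) h1.
  rewrite setI_bigcupr.
  have e : (P \o (fun k => E `&` F k)) = (fun n => (P E * (P \o F) n)%E).
    by apply: funext => n /=; case: (hF n).
  rewrite e in h2.
  exact: (cvg_unique _ h2 h3).
Qed.

Lemma pi_lambda_indep (G1 G2 : set (set T)) :
  setI_closed G1 -> setI_closed G2 ->
  G1 `<=` measurable -> G2 `<=` measurable ->
  (forall E F, G1 E -> G2 F -> P (E `&` F) = (P E * P F)%E) ->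
  forall E F, <<s G1 >> E -> <<s G2 >> F -> P (E `&` F) = (P E * P F)%E.
Proof.
move=> cI1 cI2 m1 m2 h E F sE sF.
have step1 : forall E', G1 E' -> <<s G2 >> F -> P (E' `&` F) = (P E' * P F)%E.
  move=> E' gE' sF'.
  have := @lambda_system_subset T G2 cI2 setT _ (lam (m1 _ gE')).
  move=> /(_ _ _ F sF') [] //.
  by move=> F' gF'; split; [exact: m2|exact: h].
have : [set E' | measurable E' /\ P (E' `&` F) = (P E' * P F)%E] E.
  apply: (@lambda_system_subset T G1 cI1 setT) => //.
  - have mF : measurable F.
      have := @lambda_system_subset T G2 cI2 setT _ (lam measurableT).
      by move=> /(_ _ _ F sF) [] // F' gF'; split;
        [exact: m2|rewrite setTI (prE measurableT) prT mul1e].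
    have [A1 A2 A3 A4] := lam mF; split.
    + by [].
    + by split; [exact: measurableT|rewrite setTI (prE measurableT) prT mul1e].
    + move=> A B BA [mA hA] [mB hB].
      have hA' : P (F `&` A) = (P F * P A)%E by rewrite setIC muleC.
      have hB' : P (F `&` B) = (P F * P B)%E by rewrite setIC muleC.
      have [mAB hh] := A3 A B BA (conj mA hA') (conj mB hB').
      by split => //; rewrite setIC hh muleC.
    + move=> Fs ndF hF.
      have hF' : forall k, [set F' | measurable F' /\ P (F `&` F') = (P F * P F')%E] (Fs k).
        by move=> k; case: (hF k) => mk hk; split => //; rewrite setIC muleC.
      have [mU hU] := A4 Fs ndF hF'.
      by split => //; rewrite setIC hU muleC.
  - move=> E' gE'; split; first exact: m1.
    exact: step1.
by case.
Qed.

End Indep.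

Section IndepFun.
Context d (T : measurableType d) (R : realType) (P : probability T R).

Definition tr (Z : T -> R) (n k : nat) : set T :=
  [set w | Num.truncn (n.+1%:R * Z w) = k].

Lemma trE (Z : T -> R) n k : (forall w, 0 <= Z w) ->
  tr Z n k = Z @^-1` `[k%:R / n.+1%:R, k.+1%:R / n.+1%:R[.
Proof.
move=> Z0; apply/seteqP; split => w /=; rewrite in_itv /=.
  move=> h; have := truncn_itv (mulr_ge0 (ler0n _ n.+1) (Z0 w)).
  rewrite h => /andP[h1 h2].
  by rewrite ler_pdivrMr ?ltr0Sn // ltr_pdivlMr ?ltr0Sn // ![Z w * _]mulrC h1 h2.
move=> /andP[h1 h2]; apply/eqP; rewrite truncn_eq ?mulr_ge0 //.
rewrite ler_pdivrMr ?ltr0Sn // in h1; rewrite ltr_pdivlMr ?ltr0Sn // in h2.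
by rewrite ![_ * Z w]mulrC h1 h2.
Qed.

Definition An (Z : T -> R) (n : nat) (w : T) : R :=
  \sum_(k < n.+2) (k%:R / n.+1%:R) * \1_(tr Z n k) w.

Lemma An_eq Z n w : 0 <= Z w <= 1 ->
  An Z n w = (Num.truncn (n.+1%:R * Z w))%:R / n.+1%:R.
Proof.
move=> /andP[z0 z1].
set t := Num.truncn (n.+1%:R * Z w).
have ht : (t < n.+2)%N.
  rewrite truncn_lt_nat ?mulr_ge0 //.
  have h1 : n.+1%:R * Z w <= n.+1%:R by rewrite ler_piMr.
  have h2 : n.+2%:R = n.+1%:R + 1 :> R by rewrite -natr1.
  lra.
rewrite /An (bigD1 (Ordinal ht)) //= big1 ?addr0.
  by rewrite indicE mem_set // mulr1.
move=> k hk; rewrite indicE.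
have -> : (w \in tr Z n k) = false.
  apply/negbTE/negP => /set_mem h.
  by move: hk; rewrite /tr /= in h; apply/negP; rewrite negbK; apply/eqP/val_inj.
by rewrite mulr0.
Qed.

Lemma An_bounds Z n w : 0 <= Z w <= 1 ->
  0 <= An Z n w <= Z w /\ Z w - n.+1%:R^-1 <= An Z n w.
Proof.
move=> hz; have /andP[z0 z1] := hz; rewrite An_eq //.
have := truncn_itv (mulr_ge0 (ler0n _ n.+1) z0).
set t := Num.truncn _ => /andP[h1 h2].
have N0 : 0 < n.+1%:R :> R by rewrite ltr0Sn.
have e : t.+1%:R = t%:R + 1 :> R by rewrite -natr1.
split; first (apply/andP; split).
- by rewrite divr_ge0.
- by rewrite ler_pdivrMr // mulrC.
- rewrite ler_pdivlMr // mulrBl mulVf ?gt_eqF //; rewrite mulrC; lra.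
Qed.

Lemma small_eq0 (a : R) : (forall n : nat, `|a| <= 2 / n.+1%:R) -> a = 0.
Proof.
move=> h; apply/eqP; apply: contraT => ha.
have a0 : 0 < `|a| by rewrite normr_gt0.
set n := Num.truncn (2 / `|a|).
have h1 : 2 / `|a| < n.+1%:R by apply: truncnS_gt.
have := h n; rewrite ler_pdivlMr ?ltr0Sn // => h2.
rewrite ltr_pdivrMr // in h1.
have : `|a| * n.+1%:R < `|a| * n.+1%:R by apply: (le_lt_trans h2); rewrite mulrC.
by rewrite ltxx.
Qed.

Lemma bmf01 (Z : T -> R) : measurable_fun setT Z -> (forall w, 0 <= Z w <= 1) -> bmf Z.
Proof.
move=> mZ hZ; split => //; exists 1 => w; have /andP[h1 h2] := hZ w.
by rewrite ger0_norm.
Qed.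

Lemma bmf_An Z n : (forall k, measurable (tr Z n k)) -> bmf (An Z n).
Proof.
move=> m; rewrite /An; apply: bmf_sum => k; apply: bmfM; first exact: bmf_cst.
exact: bmf_indic.
Qed.

Lemma RE_An Z n : (forall k, measurable (tr Z n k)) ->
  RE P (An Z n) = \sum_(k < n.+2) (k%:R / n.+1%:R) * pr P (tr Z n k).
Proof.
move=> m; rewrite /An.
rewrite (@RE_sum _ _ _ P _ (fun (k : 'I_n.+2) w => (k%:R / n.+1%:R) * \1_(tr Z n k) w)).
  apply: eq_bigr => k _; rewrite REZ ?RE_indic //; exact: bmf_indic.
move=> k; apply: bmfM; first exact: bmf_cst.
exact: bmf_indic.
Qed.

Lemma pr_indep (E F : set T) : measurable E -> measurable F ->
  P (E `&` F) = (P E * P F)%E -> pr P (E `&` F) = pr P E * pr P F.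
Proof.
move=> mE mF h; rewrite /pr h fineM //; exact: fin_num_measure.
Qed.

Lemma RE_An2 X Y n : (forall k, measurable (tr X n k)) ->
  (forall k, measurable (tr Y n k)) ->
  (forall k l, P (tr X n k `&` tr Y n l) = (P (tr X n k) * P (tr Y n l))%E) ->
  RE P (fun w => An X n w * An Y n w) = RE P (An X n) * RE P (An Y n).
Proof.
move=> mX mY hI.
rewrite (RE_An mX) (RE_An mY).
have e : (fun w => An X n w * An Y n w) = (fun w => \sum_(k < n.+2) \sum_(l < n.+2)
   ((k%:R / n.+1%:R) * (l%:R / n.+1%:R)) * \1_(tr X n k `&` tr Y n l) w).
  apply: funext => w; rewrite /An mulr_suml; apply: eq_bigr => k _.
  rewrite mulr_sumr; apply: eq_bigr => l _.
  by rewrite indicI /= mulrACA.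
have bI k l : bmf (\1_(tr X n k `&` tr Y n l)).
  by apply: bmf_indic; apply: measurableI.
rewrite e (@RE_sum _ _ _ P _ (fun (k : 'I_n.+2) w => \sum_(l < n.+2)
   ((k%:R / n.+1%:R) * (l%:R / n.+1%:R)) * \1_(tr X n k `&` tr Y n l) w)); last first.
  move=> k; apply: bmf_sum => l; apply: bmfM => //; exact: bmf_cst.
rewrite mulr_suml; apply: eq_bigr => k _.
rewrite (@RE_sum _ _ _ P _ (fun (l : 'I_n.+2) w =>
   ((k%:R / n.+1%:R) * (l%:R / n.+1%:R)) * \1_(tr X n k `&` tr Y n l) w)); last first.
  move=> l; apply: bmfM => //; exact: bmf_cst.
rewrite mulr_sumr; apply: eq_bigr => l _.
rewrite REZ // RE_indic; last by apply: measurableI.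
rewrite -/(pr P _) pr_indep //.
by rewrite mulrACA.
Qed.

Lemma indep_fun (C1 C2 : set (set T)) :
  (forall E F, C1 E -> C2 F -> P (E `&` F) = (P E * P F)%E) ->
  C1 `<=` measurable -> C2 `<=` measurable ->
  forall X Y : T -> R, (forall w, 0 <= X w <= 1) -> (forall w, 0 <= Y w <= 1) ->
  (forall a b, C1 (X @^-1` `[a, b[)) -> (forall a b, C2 (Y @^-1` `[a, b[)) ->
  measurable_fun setT X -> measurable_fun setT Y ->
  RE P (fun w => X w * Y w) = RE P X * RE P Y.
Proof.
move=> hI m1 m2 X Y hX hY cX cY mX mY.
have X0 w : 0 <= X w by case/andP: (hX w).
have Y0 w : 0 <= Y w by case/andP: (hY w).
have c1 n k : C1 (tr X n k) by rewrite trE //; apply: cX.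
have c2 n k : C2 (tr Y n k) by rewrite trE //; apply: cY.
have bX := bmf01 mX hX; have bY := bmf01 mY hY.
have mtX n k : measurable (tr X n k) by apply: m1.
have mtY n k : measurable (tr Y n k) by apply: m2.
have bAX n := bmf_An (mtX n); have bAY n := bmf_An (mtY n).
apply/eqP; rewrite -subr_eq0; apply/eqP; apply: small_eq0 => n.
set e := n.+1%:R^-1 : R.
have key := RE_An2 (mtX n) (mtY n) (fun k l => hI _ _ (c1 n k) (c2 n l)).
have pw w : X w * Y w - 2 * e <= An X n w * An Y n w <= X w * Y w.
  have [[/andP[a0 a1] a2]] := An_bounds n (hX w).
  have [[/andP[b0 b1] b2]] := An_bounds n (hY w).
  have /andP[x0 x1] := hX w; have /andP[y0 y1] := hY w.
  apply/andP; split; last exact: ler_pM.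
  rewrite -/e in a2 b2. nra.
have bXY : bmf (fun w => X w * Y w) by apply: bmfM.
have bAA : bmf (fun w => An X n w * An Y n w) by apply: bmfM.
have r1 : RE P (fun w => X w * Y w) - 2 * e <= RE P (fun w => An X n w * An Y n w).
  rewrite -(RE_cst P (2 * e)) -REB //; last exact: bmf_cst.
  by apply: RE_le => //; [apply: bmfB => //; exact: bmf_cst| move=> w; case/andP: (pw w)].
have r2 : RE P (fun w => An X n w * An Y n w) <= RE P (fun w => X w * Y w).
  by apply: RE_le => // w; case/andP: (pw w).
have s1 : RE P X - e <= RE P (An X n) <= RE P X.
  apply/andP; split.
    rewrite -(RE_cst P e) -REB //; last exact: bmf_cst.
    apply: RE_le => //; first by apply: bmfB => //; exact: bmf_cst.
    by move=> w; have [_] := An_bounds n (hX w).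
  by apply: RE_le => // w; have [/andP[_]] := An_bounds n (hX w).
have s2 : RE P Y - e <= RE P (An Y n) <= RE P Y.
  apply/andP; split.
    rewrite -(RE_cst P e) -REB //; last exact: bmf_cst.
    apply: RE_le => //; first by apply: bmfB => //; exact: bmf_cst.
    by move=> w; have [_] := An_bounds n (hY w).
  by apply: RE_le => // w; have [/andP[_]] := An_bounds n (hY w).
have t1 : 0 <= RE P (An X n).
  by apply: RE_ge0 => w; have [/andP[]] := An_bounds n (hX w).
have t2 : 0 <= RE P (An Y n).
  by apply: RE_ge0 => w; have [/andP[]] := An_bounds n (hY w).
have u1 : RE P X <= 1.
  by rewrite -(RE_cst P 1); apply: RE_le => //; [exact: bmf_cst|move=> w; case/andP: (hX w)].
have u2 : RE P Y <= 1.
  by rewrite -(RE_cst P 1); apply: RE_le => //; [exact: bmf_cst|move=> w; case/andP: (hY w)].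
have e0 : 0 <= e by rewrite invr_ge0.
have -> : 2 / n.+1%:R = 2 * e by [].
rewrite key in r1 r2.
case/andP: s1 => s1a s1b; case/andP: s2 => s2a s2b.
rewrite ler_norml; apply/andP; split; nra.
Qed.

End IndepFun.

Section Val.
Variables (R : realType) (S A : finType) (pi : S -> A -> R) (r : S -> A -> R) (gamma : R).
Hypotheses (hpi : is_policy pi) (g0 : 0 <= gamma) (g1 : gamma < 1).

Definition rp (x : S) : R := \sum_(a : A) pi x a * r x a.
Definition cR : R := \sum_(x : S) `|rp x|.
Definition term (q : S -> A -> S -> R) (s : S) (h : nat) : R :=
  gamma ^+ h * \sum_(x : S) state_dist pi q h s x * rp x.

Lemma sd_ge0 q : is_transition q -> forall h s x, 0 <= state_dist pi q h s x.
Proof.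
move=> hq; elim=> [|h IH] s x /=; first by rewrite ler0n.
apply: sumr_ge0 => y _; apply: mulr_ge0 => //; apply: sumr_ge0 => a _.
by apply: mulr_ge0; [case: (hpi y) => h1 _; apply: h1|case: (hq y a) => h1 _; apply: h1].
Qed.

Lemma sd_sum q : is_transition q -> forall h s, \sum_(x : S) state_dist pi q h s x = 1.
Proof.
move=> hq; elim=> [|h IH] s /=.
  by rewrite (bigD1 s) //= eqxx big1 ?addr0 // => x /negbTE ->.
rewrite exchange_big /= -[RHS](IH s); apply: eq_bigr => y _.
rewrite -mulr_sumr exchange_big /=.
have -> : \sum_(a : A) \sum_(x : S) pi y a * q y a x = 1.
  case: (hpi y) => _ <-; apply: eq_bigr => a _.
  by rewrite -mulr_sumr; case: (hq y a) => _ ->; rewrite mulr1.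
by rewrite mulr1.
Qed.

Lemma sd_le1 q : is_transition q -> forall h s x, state_dist pi q h s x <= 1.
Proof.
move=> hq h s x; rewrite -(sd_sum hq h s) (bigD1 x) //= lerDl.
by apply: sumr_ge0 => y _; apply: sd_ge0.
Qed.

Lemma term_bound q : is_transition q -> forall s h,
  `|term q s h| <= geometric cR gamma h.
Proof.
move=> hq s h; rewrite /term /geometric /= normrM.
rewrite [`|gamma ^+ h|]ger0_norm ?exprn_ge0 // mulrC.
apply: ler_wpM2r; first by rewrite exprn_ge0.
apply: (le_trans (ler_norm_sum _ _ _)); apply: ler_sum => x _.
rewrite normrM ger0_norm ?sd_ge0 //; apply: ler_piMl => //.
exact: sd_le1.
Qed.

Lemma gnorm : `|gamma| < 1.
Proof. by rewrite ger0_norm. Qed.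

Lemma cR_ge0 : 0 <= cR.
Proof. by apply: sumr_ge0. Qed.

Lemma term_cvg q : is_transition q -> forall s, cvgn (series (term q s)).
Proof.
move=> hq s; apply: normed_cvg.
apply: (@series_le_cvg _ _ (geometric cR gamma)).
- by move=> n; exact: normr_ge0.
- by move=> n; rewrite /geometric /= mulr_ge0 ?cR_ge0 ?exprn_ge0.
- by move=> n; apply: term_bound.
- exact: is_cvg_geometric_series gnorm.
Qed.

Lemma value_series q s : value r gamma pi q s = limn (series (term q s)).
Proof. by []. Qed.

Lemma value_bound q : is_transition q -> forall s,
  `|value r gamma pi q s| <= cR / (1 - gamma).
Proof.
move=> hq s; rewrite value_series.
have hn : cvgn [normed series (term q s)].
  apply: (@series_le_cvg _ _ (geometric cR gamma)).
  - by move=> n; exact: normr_ge0.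
  - by move=> n; rewrite /geometric /= mulr_ge0 ?cR_ge0 ?exprn_ge0.
  - by move=> n; apply: term_bound.
  - exact: is_cvg_geometric_series gnorm.
apply: (le_trans (lim_series_norm hn)).
rewrite -(cvg_lim _ (@cvg_geometric_series _ cR _ gnorm)) //.
apply: lim_series_le => //; first exact: is_cvg_geometric_series gnorm.
by move=> n; apply: term_bound.
Qed.

Lemma sd_measurable d' (T' : measurableType d') (pp : T' -> S -> A -> S -> R) :
  (forall x a y, measurable_fun setT (fun w => pp w x a y)) ->
  forall h s x, measurable_fun setT (fun w => state_dist pi (pp w) h s x).
Proof.
move=> mp; elim=> [|h IH] s x /=; first exact: measurable_cst.
apply: measurable_sum => y; apply: measurable_funM; first exact: IH.
apply: measurable_sum => a; apply: measurable_funM; first exact: measurable_cst.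
exact: mp.
Qed.

Lemma value_measurable d' (T' : measurableType d') (pp : T' -> S -> A -> S -> R) :
  (forall w, is_transition (pp w)) ->
  (forall x a y, measurable_fun setT (fun w => pp w x a y)) ->
  forall s, measurable_fun setT (fun w => value r gamma pi (pp w) s).
Proof.
move=> hp mp s.
apply: (@measurable_fun_cvg _ _ _ _ (fun m w => series (term (pp w) s) m)).
  move=> m; rewrite /series /=; apply: measurable_sum => h.
  rewrite /term; apply: measurable_funM; first exact: measurable_cst.
  apply: measurable_sum => x; apply: measurable_funM; last exact: measurable_cst.
  exact: sd_measurable.
by move=> w _; apply: term_cvg.
Qed.

End Val.

Section Rect.
Context d (Omega : measurableType d) (R : realType) (S A : finType)
  (P : probability Omega R) (p : Omega -> S -> A -> S -> R) (s : S).
Hypothesis mp : forall x a y, measurable_fun setT (fun w => p w x a y).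
Hypothesis hind : independent_transitions P p.

Definition rect (B : S -> A -> S -> set R) : set Omega :=
  [set w | forall x a y, B x a y (p w x a y)].

Definition Gs : set (set Omega) := [set E | exists B : A -> S -> set R,
  (forall a y, measurable (B a y)) /\ E = rect (fun x a y => if x == s then B a y else setT)].

Definition Gb : set (set Omega) := [set E | exists B : S -> A -> S -> set R,
  (forall x a y, measurable (B x a y)) /\ E = rect (fun x a y => if x == s then setT else B x a y)].

Lemma rect_measurable B : (forall x a y, measurable (B x a y)) -> measurable (rect B).
Proof.
move=> mB.
have -> : rect B = \bigcap_(i in [set: (S * A * S)%type])
    ((fun w => p w i.1.1 i.1.2 i.2) @^-1` B i.1.1 i.1.2 i.2).
  apply/seteqP; split => w /=.
    by move=> h [[x a] y] _; apply: h.
  by move=> h x a y; apply: (h (x, a, y)).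
apply: fin_bigcap_measurable; first exact: finite_finset.
move=> [[x a] y] _ /=; rewrite -[X in measurable X]setTI.
exact: mp.
Qed.

Lemma rectI B B' : rect B `&` rect B' = rect (fun x a y => B x a y `&` B' x a y).
Proof.
apply/seteqP; split => w /=.
  by move=> [h1 h2] x a y; split; [apply: h1|apply: h2].
by move=> h; split => x a y; case: (h x a y).
Qed.

Lemma Gs_meas : Gs `<=` measurable.
Proof.
move=> E [B [mB ->]]; apply: rect_measurable => x a y.
by case: (x == s) => //; exact: measurableT.
Qed.

Lemma Gb_meas : Gb `<=` measurable.
Proof.
move=> E [B [mB ->]]; apply: rect_measurable => x a y.
by case: (x == s) => //; exact: measurableT.
Qed.

Lemma Gs_setI : setI_closed Gs.
Proof.
move=> E F [B [mB ->]] [B' [mB' ->]]; exists (fun a y => B a y `&` B' a y); split.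
  by move=> a y; apply: measurableI.
rewrite rectI; congr rect; apply: funext => x; apply: funext => a; apply: funext => y.
by case: (x == s); rewrite ?setIT.
Qed.

Lemma Gb_setI : setI_closed Gb.
Proof.
move=> E F [B [mB ->]] [B' [mB' ->]]; exists (fun x a y => B x a y `&` B' x a y); split.
  by move=> x a y; apply: measurableI.
rewrite rectI; congr rect; apply: funext => x; apply: funext => a; apply: funext => y.
by case: (x == s); rewrite ?setIT.
Qed.

Lemma rect_prod B : (forall x a y, measurable (B x a y)) ->
  P (rect B) = (\prod_(x : S) P [set w | forall a y, B x a y (p w x a y)])%E.
Proof.
move=> mB; rewrite -hind //.
congr (P _); apply/seteqP; split => w /=.
  by move=> h x _ a y; apply: h.
by move=> h x a y; apply: (h x I).
Qed.

Lemma Gs_Gb_indep E F : Gs E -> Gb F -> P (E `&` F) = (P E * P F)%E.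
Proof.
move=> [B [mB ->]] [B' [mB' ->]].
rewrite rectI.
set C := fun x a y => _.
have mC : forall x a y, measurable (C x a y).
  by move=> x a y; rewrite /C; case: (x == s); rewrite ?setIT ?setTI //; exact: measurableT.
rewrite !rect_prod //; try by move=> x a y; case: (x == s) => //; exact: measurableT.
rewrite (bigD1 s) //= [X in (_ = X * _)%E](bigD1 s) //= [X in (_ = _ * X)%E](bigD1 s) //=.
rewrite [X in (_ = (_ * X) * _)%E]big1; last first.
  move=> x /negbTE xs; rewrite xs.
  have -> : [set w | forall (a : A) (y : S), [set: R] (p w x a y)] = setT.
    by apply/seteqP; split.
  exact: probability_setT.
rewrite mule1 !eqxx.
have -> : [set w | forall (a : A) (y : S), [set: R] (p w s a y)] = setT.
  by apply/seteqP; split.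
rewrite probability_setT mul1e.
congr (_ * _)%E.
  by rewrite /C eqxx; congr (P _); apply/seteqP; split => w /= h a y; [case: (h a y)|split => //; apply: h].
apply: eq_bigr => x xs; rewrite /C (negbTE xs).
by congr (P _); apply/seteqP; split => w /= h a y; [case: (h a y)|split => //; apply: h].
Qed.

Lemma indep_sigma E F : <<s Gs >> E -> <<s Gb >> F -> P (E `&` F) = (P E * P F)%E.
Proof.
apply: (pi_lambda_indep Gs_setI Gb_setI Gs_meas Gb_meas Gs_Gb_indep).
Qed.

Lemma sigma_meas (G : set (set Omega)) : G `<=` measurable -> <<s G >> `<=` measurable.
Proof. by move=> HG; apply: smallest_sub => //; exact: sigma_algebra_measurable. Qed.

Local Notation Ts := (g_sigma_algebraType Gs).
Local Notation Tb := (g_sigma_algebraType Gb).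

Lemma mfun_sub (G : set (set Omega)) (HG : G `<=` measurable) (f : Omega -> R) :
  @measurable_fun _ _ (g_sigma_algebraType G) R setT f -> measurable_fun setT f.
Proof.
move=> mf _ B mB; apply: (sigma_meas HG).
exact: (mf measurableT B mB).
Qed.

Lemma coord_s a y : @measurable_fun _ _ Ts R setT (fun w => p w s a y).
Proof.
move=> _ B mB; rewrite setTI; apply: sub_sigma_algebra.
exists (fun a' y' => if (a' == a) && (y' == y) then B else setT); split.
  by move=> a' y'; case: ifP => // _; exact: measurableT.
apply/seteqP; split => w /=.
  move=> h x a' y'; case: (eqVneq x s) => [->|//].
  by case: (eqVneq a' a) => [->|//]; case: (eqVneq y' y) => [->|//].
by move=> /(_ s a y); rewrite !eqxx.
Qed.

Definition ps (w : Omega) (x : S) (a : A) (y : S) : R :=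
  if x == s then (y == s)%:R else p w x a y.

Lemma coord_b x a y : @measurable_fun _ _ Tb R setT (fun w => ps w x a y).
Proof.
rewrite /ps; case: (eqVneq x s) => [_|xs]; first exact: measurable_cst.
move=> _ B mB; rewrite setTI; apply: sub_sigma_algebra.
exists (fun x' a' y' => if [&& x' == x, a' == a & y' == y] then B else setT); split.
  by move=> x' a' y'; case: ifP => // _; exact: measurableT.
apply/seteqP; split => w /=.
  move=> h x' a' y'; case: (eqVneq x' s) => [//|x's].
  by case: (eqVneq x' x) => [->|//]; case: (eqVneq a' a) => [->|//];
    case: (eqVneq y' y) => [->|//].
by move=> /(_ x a y); rewrite (negbTE xs) !eqxx.
Qed.

Hypothesis hp : forall w, is_transition (p w).

Lemma ps_trans w : is_transition (ps w).
Proof.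
move=> x a; rewrite /ps; case: (x == s); last exact: hp.
split; first by move=> y; rewrite ler0n.
by rewrite (bigD1 s) //= eqxx big1 ?addr0 // => y /negbTE ->.
Qed.

Variables (pi : S -> A -> R) (r : S -> A -> R) (gamma : R).
Hypotheses (hpi : is_policy pi) (g0 : 0 <= gamma) (g1 : gamma < 1).

Lemma bmf_value j : bmf (fun w => value r gamma pi (p w) j).
Proof.
split; first exact: (value_measurable r hpi g0 g1 hp mp j).
by exists (cR pi r / (1 - gamma)) => w; apply: (value_bound r hpi g0 g1 (hp w)).
Qed.

Lemma indepXV (X : Omega -> R) (j : S) :
  @measurable_fun _ _ Ts R setT X ->
  (forall w, 0 <= X w <= 1) ->
  (forall w, value r gamma pi (p w) j = value r gamma pi (ps w) j) ->
  RE P (fun w => X w * value r gamma pi (p w) j) =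
  RE P X * RE P (fun w => value r gamma pi (p w) j).
Proof.
move=> mXs hX hV.
set V := fun w => value r gamma pi (p w) j.
set c := cR pi r / (1 - gamma) + 1.
have c1 : 0 <= cR pi r / (1 - gamma).
  by rewrite divr_ge0 ?cR_ge0 // subr_ge0 ltW.
have c0 : 0 < c by rewrite /c; lra.
have hVb w : `|V w| <= c - 1.
  by rewrite /c addrK; apply: (value_bound r hpi g0 g1 (hp w)).
set Y := fun w => (V w + c) / (2 * c).
have c20 : 0 < 2 * c by rewrite mulr_gt0.
have hY w : 0 <= Y w <= 1.
  have := hVb w; rewrite ler_norml => /andP[h1 h2].
  rewrite /Y ler_pdivlMr // ler_pdivrMr // mul0r mul1r; apply/andP; split; lra.
have mYb : @measurable_fun _ _ Tb R setT Y.
  have -> : Y = (fun w => (value r gamma pi (ps w) j + c) / (2 * c)).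
    by apply: funext => w; rewrite /Y /V hV.
  apply: measurable_funM; last exact: measurable_cst.
  apply: measurable_funD; last exact: measurable_cst.
  exact: (value_measurable (T':=Tb) (pp:=ps) r hpi g0 g1 ps_trans coord_b j).
have mY := mfun_sub Gb_meas mYb.
have mX := mfun_sub Gs_meas mXs.
have key : RE P (fun w => X w * Y w) = RE P X * RE P Y.
  apply: (indep_fun indep_sigma (sigma_meas Gs_meas) (sigma_meas Gb_meas) hX hY) => //.
    by move=> a b; have := mXs measurableT _ (measurable_itv (Interval (BLeft a) (BLeft b))); rewrite setTI.
  by move=> a b; have := mYb measurableT _ (measurable_itv (Interval (BLeft a) (BLeft b))); rewrite setTI.
have bX : bmf X by apply: bmf01.
have bY : bmf Y by apply: bmf01.
have eV : V = (fun w => (2 * c) * Y w - c).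
  by apply: funext => w; rewrite /Y mulrC divfK ?gt_eqF // addrK.
have eXV : (fun w => X w * V w) = (fun w => (2 * c) * (X w * Y w) - c * X w).
  by apply: funext => w; rewrite eV /=; ring.
have bXY : bmf (fun w => X w * Y w) := bmfM bX bY.
have bc := fun k : R => @bmf_cst _ Omega R k.
rewrite eXV (REB P (bmfM (bc _) bXY) (bmfM (bc _) bX)) (REZ P _ bXY) (REZ P _ bX) key.
rewrite eV (REB P (bmfM (bc _) bY) (bc _)) (REZ P _ bY) RE_cst.
ring.
Qed.

End Rect.

Section Alg.
Variables (R : realType) (S A : finType) (pi : S -> A -> R) (s : S).

Definition QQ (q : S -> A -> S -> R) (j : S) : R := \sum_(a : A) pi s a * q s a j.

Lemma nm_eq q f : next_mean pi q s f = \sum_(j : S) QQ q j * f j.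
Proof.
rewrite /next_mean exchange_big /=; apply: eq_bigr => j _.
by rewrite /QQ mulr_suml.
Qed.

Lemma sq_expand (t f m : R) : t * (f - m) ^+ 2 = t * f ^+ 2 - 2 * m * (t * f) + m ^+ 2 * t.
Proof. ring. Qed.

Lemma nv_eq q f : \sum_(j : S) QQ q j = 1 ->
  next_var pi q s f = \sum_(j : S) QQ q j * f j ^+ 2 - (\sum_(j : S) QQ q j * f j) ^+ 2.
Proof.
move=> h1; rewrite /next_var -nm_eq.
set m := next_mean pi q s f.
rewrite exchange_big /=.
have -> : \sum_(j : S) \sum_(a : A) pi s a * q s a j * (f j - m) ^+ 2
  = \sum_(j : S) (QQ q j * f j ^+ 2 - (2 * m) * (QQ q j * f j) + m ^+ 2 * QQ q j).
  apply: eq_bigr => j _; rewrite /QQ -mulr_suml; apply: sq_expand.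
rewrite !big_split /= sumrN -!mulr_sumr h1 /m nm_eq.
rewrite nm_eq.
move: (\sum_j QQ q j * f j) (\sum_j QQ q j * f j ^+ 2) => t1 t2; ring.
Qed.

Lemma QQ_sum q : is_policy pi -> (forall a, \sum_(y : S) q s a y = 1) ->
  \sum_(j : S) QQ q j = 1.
Proof.
move=> hpi hq; rewrite /QQ exchange_big /=; case: (hpi s) => _ <-.
by apply: eq_bigr => a _; rewrite -mulr_sumr hq mulr1.
Qed.

Lemma nv_ge0 q f : is_policy pi -> (forall a y, 0 <= q s a y) -> 0 <= next_var pi q s f.
Proof.
move=> hpi hq; apply: sumr_ge0 => a _; apply: sumr_ge0 => y _.
apply: mulr_ge0; last exact: sqr_ge0.
by apply: mulr_ge0 => //; case: (hpi s).
Qed.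

End Alg.

Lemma sum_neq0 (R : numDomainType) (I : finType) (F : I -> R) :
  \sum_(i : I) F i != 0 -> exists i, F i != 0.
Proof.
move=> h; case: (pickP (fun i => F i != 0)) => [i hi|h0]; first by exists i.
by move: h; rewrite big1 ?eqxx // => i _; apply/eqP; move: (h0 i) => /negbFE.
Qed.

Section Acyc.
Variables (R : realType) (S A : finType) (pi : S -> A -> R) (q : S -> A -> S -> R)
  (term : pred S) (rho : S -> nat).
Hypotheses (hq : is_transition q)
  (hac : forall s a s', (term s -> q s a s = 1) /\ (~~ term s -> q s a s' != 0 -> (rho s < rho s')%N)).

Lemma term_row x a y : term x -> y != x -> q x a y = 0.
Proof.
move=> tx yx; have [h0 h1] := hq x a.
have hx : q x a x = 1 by case: (hac x a x) => h _; apply: h.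
have h2 : \sum_(i | i != x) q x a i = 0.
  by move: h1; rewrite (bigD1 x) //= hx => h1; lra.
exact: (psumr_eq0P (fun i _ => h0 i) h2 yx).
Qed.

Lemma reach h j y : state_dist pi q h j y != 0 -> (rho j <= rho y)%N.
Proof.
elim: h y => [|h IH] y /=.
  by case: (eqVneq y j) => [->|]; rewrite ?leqnn // eqxx.
move=> /sum_neq0 [z]; rewrite mulf_eq0 negb_or => /andP[hz /sum_neq0 [a]].
rewrite mulf_eq0 negb_or => /andP[_ hza].
apply: (leq_trans (IH _ hz)).
case: (boolP (term z)) => tz.
  case: (eqVneq y z) => [->//|yz].
  by move: hza; rewrite term_row ?eqxx.
by apply: ltnW; case: (hac z a y) => _ h2; apply: h2.
Qed.

Lemma sd_s_zero s j : (rho s < rho j)%N -> forall h, state_dist pi q h j s = 0.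
Proof.
move=> hsj h; apply/eqP; apply: contraT => hn.
have := reach hn; rewrite leqNgt hsj //.
Qed.

Lemma sd_replace (q' : S -> A -> S -> R) s j : (rho s < rho j)%N ->
  (forall x, x != s -> q' x = q x) ->
  forall h x, state_dist pi q' h j x = state_dist pi q h j x.
Proof.
move=> hsj hq'; elim=> [|h IH] x //=.
apply: eq_bigr => y _; rewrite IH.
case: (eqVneq y s) => [->|ys]; first by rewrite sd_s_zero // !mul0r.
by rewrite hq'.
Qed.

Lemma value_replace (r : S -> A -> R) gamma (q' : S -> A -> S -> R) s j :
  (rho s < rho j)%N -> (forall x, x != s -> q' x = q x) ->
  value r gamma pi q' j = value r gamma pi q j.
Proof.
move=> hsj hq'; rewrite /value; f_equal; f_equal; apply: funext => n.
apply: eq_bigr => h _; congr (_ * _); apply: eq_bigr => x _.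
by rewrite (sd_replace hsj hq').
Qed.

End Acyc.

Lemma decomp (R : realType) (S : finType) (q v b : S -> R) :
  \sum_(j : S) q j = 1 ->
  (\sum_(j : S) q j * v j ^+ 2 - (\sum_(j : S) q j * v j) ^+ 2)
  - (\sum_(j : S) q j * b j ^+ 2 - (\sum_(j : S) q j * b j) ^+ 2)
  = (\sum_(j : S) q j * (v j - b j) ^+ 2 - (\sum_(j : S) q j * (v j - b j)) ^+ 2)
    + 2 * (\sum_(j : S) b j * (q j * (v j - b j))
           - \sum_(i : S) \sum_(j : S) b i * (q i * q j * (v j - b j))).
Proof.
move=> h1.
have s1 : \sum_(j : S) q j * v j ^+ 2 = \sum_(j : S) q j * b j ^+ 2
   + 2 * \sum_(j : S) b j * (q j * (v j - b j)) + \sum_(j : S) q j * (v j - b j) ^+ 2.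
  rewrite mulr_sumr -!big_split; apply: eq_bigr => j _ /=.
  move: (q j) (v j) (b j) => x y z; ring.
have s2 : \sum_(j : S) q j * v j = \sum_(j : S) q j * b j + \sum_(j : S) q j * (v j - b j).
  rewrite -big_split; apply: eq_bigr => j _ /=.
  move: (q j) (v j) (b j) => x y z; ring.
have s3 : \sum_(i : S) \sum_(j : S) b i * (q i * q j * (v j - b j)) =
   (\sum_(j : S) q j * b j) * (\sum_(j : S) q j * (v j - b j)).
  rewrite mulr_suml; apply: eq_bigr => i _; rewrite mulr_sumr; apply: eq_bigr => j _.
  move: (q i) (q j) (v j) (b j) (b i) => x1 x2 x3 x4 x5; ring.
rewrite s1 s2 s3.
move: (\sum_(j : S) q j * b j ^+ 2) (\sum_(j : S) b j * (q j * (v j - b j)))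
  (\sum_(j : S) q j * (v j - b j) ^+ 2) (\sum_(j : S) q j * b j)
  (\sum_(j : S) q j * (v j - b j)) => a1 a2 a3 a4 a5.
ring.
Qed.

Section Main.
Context d (Omega : measurableType d) (R : realType) (S A : finType)
  (P : probability Omega R) (p : Omega -> S -> A -> S -> R) (r : S -> A -> R)
  (gamma : R) (pi : S -> A -> R) (s : S).
Hypotheses (g0 : 0 <= gamma) (g1 : gamma < 1) (hp : forall w, is_transition (p w))
  (mp : forall x a y, measurable_fun setT (fun w => p w x a y))
  (hind : independent_transitions P p) (hpi : is_policy pi).
Variables (term : pred S) (rho : S -> nat).
Hypothesis hac : forall w x a y, (term x -> p w x a x = 1) /\
  (~~ term x -> p w x a y != 0 -> (rho x < rho y)%N).

Let Q (j : S) (w : Omega) : R := \sum_(a : A) pi s a * p w s a j.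
Let V (j : S) (w : Omega) : R := value r gamma pi (p w) j.
Let Vb := mean_value P p r gamma pi.
Let bc := fun k : R => @bmf_cst _ Omega R k.

Lemma bp x a y : bmf (fun w => p w x a y).
Proof.
split; first exact: mp.
exists 1 => w; have [h0 h1] := hp w x a.
rewrite ger0_norm // -h1 (bigD1 y) //= lerDl; exact: sumr_ge0.
Qed.

Lemma bQ j : bmf (Q j).
Proof. apply: bmf_sum => a; apply: bmfM; [exact: bc|exact: bp]. Qed.

Lemma bV j : bmf (V j).
Proof. exact: (bmf_value mp hp r hpi g0 g1 j). Qed.

Lemma Q_ge0 j w : 0 <= Q j w.
Proof.
apply: sumr_ge0 => a _; apply: mulr_ge0; first by case: (hpi s).
by case: (hp w s a).
Qed.

Lemma Q_sum w : \sum_(j : S) Q j w = 1.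
Proof. by apply: (QQ_sum (q := p w)) => // a; case: (hp w s a). Qed.

Lemma Q_le1 j w : Q j w <= 1.
Proof.
by rewrite -(Q_sum w) (bigD1 j) //= lerDl; apply: sumr_ge0 => i _; apply: Q_ge0.
Qed.

Lemma bmf_sq (f : Omega -> R) : bmf f -> bmf (fun w => f w ^+ 2).
Proof.
by move=> hf; rewrite (_ : (fun w => _) = (fun w => f w * f w));
  [apply: bmfM|apply: funext => w; rewrite expr2].
Qed.

Lemma bmf_nm (F : S -> Omega -> R) : (forall j, bmf (F j)) ->
  bmf (fun w => next_mean pi (p w) s (fun j => F j w)).
Proof.
move=> hF; rewrite /next_mean; apply: bmf_sum => a; apply: bmf_sum => y.
by apply: bmfM => //; apply: bmfM; [exact: bc|exact: bp].
Qed.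

Lemma bmf_nv (F : S -> Omega -> R) : (forall j, bmf (F j)) ->
  bmf (fun w => next_var pi (p w) s (fun j => F j w)).
Proof.
move=> hF; rewrite /next_var; apply: bmf_sum => a; apply: bmf_sum => y.
apply: bmfM; first by apply: bmfM; [exact: bc|exact: bp].
by apply: bmf_sq; apply: bmfB => //; apply: bmf_nm.
Qed.

Let M (w : Omega) : R := next_mean pi (p w) s Vb.

Lemma bM : bmf M.
Proof. by apply: (@bmf_nm (fun j _ => Vb j)) => j; exact: bc. Qed.

Lemma RE_Qsum : \sum_(j : S) RE P (Q j) = 1.
Proof.
rewrite -RE_sum; last exact: bQ.
rewrite (_ : (fun w => _) = (fun _ => 1)); first exact: RE_cst.
by apply: funext => w; apply: Q_sum.
Qed.

Lemma RE_M : RE P M = \sum_(j : S) RE P (Q j) * Vb j.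
Proof.
rewrite (_ : M = (fun w => \sum_(j : S) Vb j * Q j w)); last first.
  by apply: funext => w; rewrite /M nm_eq; apply: eq_bigr => j _; rewrite mulrC.
rewrite RE_sum; last by move=> j; apply: bmfM; [exact: bc|exact: bQ].
by apply: eq_bigr => j _; rewrite REZ; [rewrite mulrC|exact: bQ].
Qed.

Lemma RE_Nb : RE P (fun w => next_var pi (p w) s Vb) =
  \sum_(j : S) RE P (Q j) * Vb j ^+ 2 - RE P (fun w => M w * M w).
Proof.
rewrite (_ : (fun w => _) = (fun w => \sum_(j : S) Vb j ^+ 2 * Q j w - M w * M w)); last first.
  apply: funext => w; rewrite nv_eq; last exact: Q_sum.
  rewrite /M nm_eq expr2; congr (_ - _); apply: eq_bigr => j _; rewrite mulrC //.
rewrite REB; first last.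
- by apply: bmfM; exact: bM.
- by apply: bmf_sum => j; apply: bmfM; [exact: bc|exact: bQ].
rewrite RE_sum; last by move=> j; apply: bmfM; [exact: bc|exact: bQ].
congr (_ - _); apply: eq_bigr => j _; rewrite REZ; [by rewrite mulrC|exact: bQ].
Qed.

Lemma pbar_QQ j : QQ pi s (mean_transition P p) j = RE P (Q j).
Proof.
rewrite /Q RE_sum; last by move=> a; apply: bmfM; [exact: bc|exact: bp].
apply: eq_bigr => a _; rewrite REZ //; exact: bp.
Qed.

Lemma partA : next_var pi (mean_transition P p) s Vb =
  RE P (fun w => M w * M w) - RE P M ^+ 2 + RE P (fun w => next_var pi (p w) s Vb).
Proof.
rewrite nv_eq; last by under eq_bigr do rewrite pbar_QQ; exact: RE_Qsum.
rewrite RE_Nb RE_M.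
under eq_bigr do rewrite pbar_QQ.
under [X in _ - X ^+ 2]eq_bigr do rewrite pbar_QQ.
by rewrite [RHS]addrC [RHS]addrA subrK.
Qed.

Local Notation Ts := (g_sigma_algebraType (Gs p s)).

Lemma keyXD (X : Omega -> R) j : @measurable_fun _ _ Ts R setT X ->
  (forall w, 0 <= X w <= 1) -> (forall w, X w != 0 -> (rho s < rho j)%N) ->
  RE P (fun w => X w * (V j w - Vb j)) = 0.
Proof.
move=> mXs hX hXj.
case: (ltnP (rho s) (rho j)) => hsj; last first.
  have X0 w : X w = 0.
    by apply/eqP; apply: contraT => /hXj; rewrite ltnNge hsj.
  rewrite (_ : (fun w => _) = (fun _ => 0)); first exact: RE_cst.
  by apply: funext => w; rewrite X0 mul0r.
have bX : bmf X by apply: bmf01 => //; exact: (mfun_sub (Gs_meas mp) mXs).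
rewrite (_ : (fun w => _) = (fun w => X w * V j w - Vb j * X w)); last first.
  by apply: funext => w; rewrite mulrBr [Vb j * _]mulrC.
rewrite REB; first last.
- by apply: bmfM => //; exact: bc.
- by apply: bmfM => //; exact: bV.
rewrite REZ // (indepXV mp hind hp hpi g0 g1 mXs hX).
  by rewrite /Vb /mean_value -/(RE P _) mulrC subrr.
move=> w; symmetry; apply: (value_replace pi (hp w) (hac w) r gamma hsj).
by move=> x xs; apply: funext => a; apply: funext => y; rewrite /ps (negbTE xs).
Qed.

Lemma mQs j : @measurable_fun _ _ Ts R setT (Q j).
Proof.
apply: measurable_sum => a; apply: measurable_funM; first exact: measurable_cst.
exact: coord_s.
Qed.

Lemma Qpos j w : ~~ term s -> Q j w != 0 -> (rho s < rho j)%N.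
Proof.
move=> ts /sum_neq0 [a]; rewrite mulf_eq0 negb_or => /andP[_ h].
by case: (hac w s a j) => _; apply.
Qed.

Lemma nv_term w f : term s -> next_var pi (p w) s f = 0.
Proof.
move=> ts; rewrite nv_eq; last exact: (Q_sum w).
have hQ j : QQ pi s (p w) j = (j == s)%:R.
  case: (eqVneq j s) => [->|js].
    rewrite /QQ -[RHS](proj2 (hpi s)); apply: eq_bigr => a _.
    by case: (hac w s a s) => h _; rewrite h // mulr1.
  rewrite /QQ big1 // => a _; by rewrite (term_row (hp w) (hac w)) ?mulr0.
under eq_bigr do rewrite hQ.
under [X in _ - X ^+ 2]eq_bigr do rewrite hQ.
rewrite (bigD1 s) //= big1; last by move=> j /negbTE ->; rewrite mul0r.
rewrite [X in _ - X ^+ 2](bigD1 s) //= big1; last by move=> j /negbTE ->; rewrite mul0r.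
by rewrite eqxx !mul1r !addr0 subrr.
Qed.

Let N (w : Omega) : R := next_var pi (p w) s (value r gamma pi (p w)).
Let Nb (w : Omega) : R := next_var pi (p w) s Vb.

Lemma bN : bmf N.
Proof. exact: (@bmf_nv V bV). Qed.

Lemma bNb : bmf Nb.
Proof. by apply: (@bmf_nv (fun j _ => Vb j)) => j; exact: bc. Qed.

Lemma partB : RE P Nb <= RE P N.
Proof.
case: (boolP (term s)) => ts.
  have -> : N = Nb by apply: funext => w; rewrite /N /Nb !nv_term.
  by [].
rewrite -subr_ge0 -(REB P bN bNb).
set D := fun j w => V j w - Vb j.
set C := fun w => \sum_(j : S) Vb j * (Q j w * D j w)
           - \sum_(i : S) \sum_(j : S) Vb i * (Q i w * Q j w * D j w).
have bD j : bmf (D j) by apply: bmfB; [exact: bV|exact: bc].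
have e : (fun w => N w - Nb w) =
  (fun w => next_var pi (p w) s (fun j => D j w) + 2 * C w).
  apply: funext => w; rewrite /N /Nb !nv_eq; try exact: (Q_sum w).
  exact: decomp (Q_sum w).
have bC1 : bmf (fun w => \sum_(j : S) Vb j * (Q j w * D j w)).
  by apply: bmf_sum => j; apply: bmfM; [exact: bc|apply: bmfM; [exact: bQ|exact: bD]].
have bC2 : bmf (fun w => \sum_(i : S) \sum_(j : S) Vb i * (Q i w * Q j w * D j w)).
  apply: bmf_sum => i; apply: bmf_sum => j; apply: bmfM; first exact: bc.
  by apply: bmfM; [apply: bmfM; exact: bQ|exact: bD].
have bC : bmf C by apply: bmfB.
have bVD : bmf (fun w => next_var pi (p w) s (fun j => D j w)) by apply: bmf_nv.
rewrite e RED //; last by apply: bmfM => //; exact: bc.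
rewrite REZ //.
have -> : RE P C = 0.
  rewrite /C (REB P bC1 bC2).
  rewrite (RE_sum P (F := fun j w => Vb j * (Q j w * D j w))); last first.
    by move=> j; apply: bmfM; [exact: bc|apply: bmfM; [exact: bQ|exact: bD]].
  rewrite (RE_sum P (F := fun i w => \sum_(j : S) Vb i * (Q i w * Q j w * D j w))); last first.
    move=> i; apply: bmf_sum => j; apply: bmfM; first exact: bc.
    by apply: bmfM; [apply: bmfM; exact: bQ|exact: bD].
  rewrite big1; last first.
    move=> j _; rewrite REZ; last by apply: bmfM; [exact: bQ|exact: bD].
    rewrite keyXD ?mulr0 //; first exact: mQs.
      by move=> w; rewrite Q_ge0 Q_le1.
    by move=> w; apply: Qpos.
  rewrite big1 ?subrr // => i _.
  rewrite RE_sum; last first.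
    move=> j; apply: bmfM; first exact: bc.
    by apply: bmfM; [apply: bmfM; exact: bQ|exact: bD].
  apply: big1 => j _.
  rewrite REZ; last by apply: bmfM; [apply: bmfM; exact: bQ|exact: bD].
  rewrite (keyXD (X := fun w => Q i w * Q j w)) ?mulr0 //.
  - by apply: measurable_funM; exact: mQs.
  - move=> w; apply/andP; split; first by apply: mulr_ge0; exact: Q_ge0.
    by apply: mulr_ile1; [exact: Q_ge0|exact: Q_ge0|exact: Q_le1|exact: Q_le1].
  - move=> w; rewrite mulf_eq0 negb_or => /andP[_]; exact: Qpos.
rewrite mulr0 addr0; apply: RE_ge0 => w.
apply: nv_ge0 => // a y; by case: (hp w s a).
Qed.

Lemma main_sec :
  let Vbar := mean_value P p r gamma pi in
  let pbar := mean_transition P p in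
  let u := ((next_var pi pbar s Vbar)%:E
            - 'E_P[fun w => next_var pi (p w) s (value r gamma pi (p w))])%E in
  let w_ := ('V_P[fun w => (\sum_(a : A) \sum_(s' : S) pi s a * p w s a s' * Vbar s')%R])%E in
  let g := ('E_P[fun w => (next_var pi (p w) s (value r gamma pi (p w))
                         - next_var pi (p w) s Vbar)%R])%E in
  (u = w_ - g)%E /\ (0 <= g)%E /\ (u <= w_)%E.
Proof.
move=> Vbar pbar u w_ g.
have hu : u = (next_var pi pbar s Vbar - RE P N)%:E.
  by rewrite /u (EE P bN).
have hg : g = (RE P N - RE P Nb)%:E.
  by rewrite /g (EE P (bmfB bN bNb)) (REB P bN bNb).
have hw : w_ = (RE P (fun w => M w * M w) - RE P M ^+ 2)%:E.
  rewrite /w_ /variance covarianceE; try exact: (bmf_Lfun P bM).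
    rewrite (EE P bM) (EE P (bmfM bM bM)) -EFinM -EFinB expr2 //.
  exact: (bmf_Lfun P (bmfM bM bM)).
have hA := partA; have hB := partB.
rewrite hu hg hw; split; last split.
- rewrite -EFinB; congr (_%:E); rewrite /pbar /Vbar hA -/(Nb _).
  by move: (RE P N) (RE P Nb) (RE P (fun w => M w * M w)) (RE P M) => a1 a2 a3 a4; ring.
- by rewrite lee_fin subr_ge0.
- rewrite lee_fin /pbar /Vbar hA; lra.
Qed.

End Main.

End Helpers.

Theorem theorem2 (d : measure_display) (Omega : measurableType d)
  (R : realType) (S A : finType) (P : probability Omega R)
  (p : Omega -> S -> A -> S -> R) (r : S -> A -> R) (gamma : R)
  (pi : S -> A -> R) (s : S) :
  0 <= gamma -> gamma < 1 ->
  (forall w, is_transition (p w)) ->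
  (forall s0 a s', measurable_fun setT (fun w => p w s0 a s')) ->
  independent_transitions P p ->
  acyclic_mdp p ->
  is_policy pi ->
  let Vbar := mean_value P p r gamma pi in
  let pbar := mean_transition P p in
  let u := ((next_var pi pbar s Vbar)%:E
            - 'E_P[fun w => next_var pi (p w) s (value r gamma pi (p w))])%E in
  let w_ := ('V_P[fun w => (\sum_(a : A) \sum_(s' : S) pi s a * p w s a s' * Vbar s')%R])%E in
  let g := ('E_P[fun w => (next_var pi (p w) s (value r gamma pi (p w))
                         - next_var pi (p w) s Vbar)%R])%E in
  (u = w_ - g)%E /\ (0 <= g)%E /\ (u <= w_)%E.
Proof.
move=> g0 g1 hp mp hind [term [rho hac]] hpi.
exact: (Helpers.main_sec r s g0 g1 hp mp hind hpi hac).
Qed.
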